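(* Let $G$ be a second countable locally compact abelian group, let $\mu$ be a translation bounded measure on $G$, and let $\mathcal{A}=(A_n)_n$ be a van Hove sequence in $G$. Assume that \[\liminf_{n\to\infty}\frac{|\mu|(A_n)}{\mathrm{vol}(A_n)}>0.\] (a) If $\gamma_{\mathrm{count}}$ is any vague cluster point of the sequence $(\gamma_{\mu_n})_n$, then there exist $C\in(0,\infty)$ and a vague cluster point $\gamma_{\mathrm{dens}}$ of $(\gamma_n)_n$ such that $\gamma_{\mathrm{dens}}=C\gamma_{\mathrm{count}}$. (b) If $\gamma_{\mathrm{dens}}$ is any vague cluster point of $(\gamma_n)_n$, then there exist $D\in(0,\infty)$ and a vague cluster point $\gamma_{\mathrm{count}}$ of $(\gamma_{\mu_n})_n$ such that $\gamma_{\mathrm{count}}=D\gamma_{\mathrm{dens}}$.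
   Context: $\mathrm{vol}$ denotes Haar measure on $G$. A van Hove sequence is a sequence $(A_n)_n$ of compact sets of positive Haar measure such that for every compact $K\subseteq G$, $\mathrm{vol}(\partial^K A_n)/\mathrm{vol}(A_n)\to0$, where $\partial^K A=((A+K)\setminus A^\circ)\cup((\overline{G\setminus A}-K)\cap A)$. A (Radon) measure $\mu$ is translation bounded if $\sup_{t\in G}|\mu|(t+K)<\infty$ for every compact $K$, where $|\mu|$ is the total variation measure. For a finite measure $\nu$, $\widetilde{\nu}$ denotes the reflected conjugate measure $\widetilde\nu(A)=\overline{\nu(-A)}$. Set $\mu_n=\mu|_{A_n}$, $\gamma_{\mu_n}=\frac{1}{|\mu_n|(G)}\mu_n*\widetilde{\mu_n}$ if $\mu_n\neq0$ and $\gamma_{\mu_n}=0$ otherwise, and $\gamma_n=\frac{1}{\mathrm{vol}(A_n)}\mu_n*\widetilde{\mu_n}$. Cluster points are taken in the vague topology (weak-* topology with respect to compactly supported continuous functions). *)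

(* Defs.v *)
From HB Require Import structures.
From mathcomp Require Import all_boot all_order all_algebra.
From mathcomp Require Import all_classical all_reals all_analysis.

Set Implicit Arguments.
Unset Strict Implicit.
Unset Printing Implicit Defensive.

Import Order.TTheory GRing.Theory Num.Theory.
Import numFieldNormedType.Exports.
Local Open Scope classical_set_scope.
Local Open Scope ring_scope.

(* The Borel sigma-algebra of a topological abelian group G:
   borel G is G equipped with the sigma-algebra generated by the open sets. *)
Definition borel (G : topologicalZmodType) : Type := G.

Section BorelInstance.
Variable G : topologicalZmodType.
HB.instance Definition _ := Choice.on (borel G).
HB.instance Definition _ := isPointed.Build (borel G) (0 : G).
Definition open_sets : set (set (borel G)) := @open G.
HB.instance Definition _ := @isMeasurable.Build (sigma_display open_sets)
  (borel G) <<s open_sets >> (@sigma_algebra0 _ setT open_sets)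
  (@sigma_algebraC _ open_sets) (@sigma_algebra_bigcup _ setT open_sets).
End BorelInstance.

Section Defs.
Context {R : realType} {G : topologicalZmodType}.
Local Notation BG := (borel G).

Definition mev (m : {measure set BG -> \bar R}) (A : set G) : \bar R :=
  m (A : set BG).
Definition bmeasurable (A : set G) : Prop := measurable (A : set BG).
Definition rint (m : {measure set BG -> \bar R}) (A : set G) (f : G -> R) : R :=
  Rintegral m (A : set BG) (f : BG -> R).

Definition setadd (A B : set G) : set G := [set a + b | a in A & b in B].
Definition setsub (A B : set G) : set G := [set a - b | a in A & b in B].
Definition translate (t : G) (A : set G) : set G := [set t + a | a in A].

Definition vH_boundary (K A : set G) : set G :=
  (setadd A K `\` interior A) `|` (setsub (closure (~` A)) K `&` A).

Definition haar_measure (vol : {measure set BG -> \bar R}) : Prop :=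
  [/\ (forall (t : G) (A : set G), bmeasurable A -> mev vol (translate t A) = mev vol A),
      (forall K : set G, compact K -> (mev vol K < +oo)%E) &
      (forall U : set G, open U -> U !=set0 -> (0 < mev vol U)%E)].

Definition van_Hove (vol : {measure set BG -> \bar R}) (A : nat -> set G) : Prop :=
  (forall n, compact (A n)) /\ (forall n, (0 < mev vol (A n))%E) /\
  (forall K : set G, compact K ->
     (fun n => fine (mev vol (vH_boundary K (A n))) / fine (mev vol (A n))) @ \oo --> 0).

Definition cnorm (z : R * R) : R := Num.sqrt (z.1 ^+ 2 + z.2 ^+ 2).
Definition cscale (c : R) (z : R * R) : R * R := (c * z.1, c * z.2).
Definition csub (z w : R * R) : R * R := (z.1 - w.1, z.2 - w.2).

(* A complex Radon measure  mu = (rp - rn) + i (ip - in)  given by four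
   positive locally finite Borel measures (Jordan decompositions of the
   real and imaginary parts).  Only intrinsic quantities of mu are used. *)
Record cmeasure := CMeasure {
  cm_rp : {measure set BG -> \bar R};
  cm_rn : {measure set BG -> \bar R};
  cm_ip : {measure set BG -> \bar R};
  cm_in : {measure set BG -> \bar R} }.

Definition locally_finite_m (m : {measure set BG -> \bar R}) : Prop :=
  forall K : set G, compact K -> (mev m K < +oo)%E.

Definition cm_locally_finite (mu : cmeasure) : Prop :=
  [/\ locally_finite_m (cm_rp mu), locally_finite_m (cm_rn mu),
      locally_finite_m (cm_ip mu) & locally_finite_m (cm_in mu)].

Definition cval (mu : cmeasure) (B : set G) : R * R :=
  (fine (mev (cm_rp mu) B) - fine (mev (cm_rn mu) B),
   fine (mev (cm_ip mu) B) - fine (mev (cm_in mu) B)).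

Definition tvar (mu : cmeasure) (A : set G) : \bar R :=
  ereal_sup [set x : \bar R | exists (n : nat) (B : 'I_n -> set G),
     [/\ (forall i, bmeasurable (B i)), (forall i, B i `<=` A),
         (forall i j, i != j -> B i `&` B j = set0) &
         x = (\sum_(i < n) cnorm (cval mu (B i)))%:E]].

Definition translation_bounded (mu : cmeasure) : Prop :=
  forall K : set G, compact K ->
    exists M : R, forall t : G, (tvar mu (translate t K) <= M%:E)%E.

Definition Cc (f : G -> R) : Prop :=
  continuous f /\ exists K : set G, compact K /\ (forall x, ~ K x -> f x = 0).

Definition dbl (p q : {measure set BG -> \bar R}) (A : set G) (f : G -> R) : R :=
  rint p A (fun x => rint q A (fun y => f (x - y))).

Definition sdbl (p1 p2 q1 q2 : {measure set BG -> \bar R}) A f : R :=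
  dbl p1 q1 A f - dbl p1 q2 A f - dbl p2 q1 A f + dbl p2 q2 A f.

(* (mu|_A * ~(mu|_A))(f) = int int f(x - y) d mu_A(x) d conj(mu_A)(y),
   f real-valued; with mu = a + i b this is
   (a,a) + (b,b) + i ((b,a) - (a,b)). *)
Definition autocorr (mu : cmeasure) (A : set G) (f : G -> R) : R * R :=
  let a1 := cm_rp mu in let a2 := cm_rn mu in
  let b1 := cm_ip mu in let b2 := cm_in mu in
  (sdbl a1 a2 a1 a2 A f + sdbl b1 b2 b1 b2 A f,
   sdbl b1 b2 a1 a2 A f - sdbl a1 a2 b1 b2 A f).

Definition gamma_dens (vol : {measure set BG -> \bar R}) (mu : cmeasure)
  (A : nat -> set G) (n : nat) (f : G -> R) : R * R :=
  cscale (fine (mev vol (A n)))^-1 (autocorr mu (A n) f).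

(* gamma_{mu_n} = (1/|mu_n|(G)) mu_n * ~mu_n, or 0 if mu_n = 0;
   note |mu_n|(G) = |mu|(A_n), and mu_n = 0 iff |mu|(A_n) = 0 *)
Definition gamma_count (mu : cmeasure) (A : nat -> set G) (n : nat)
  (f : G -> R) : R * R :=
  if tvar mu (A n) == 0%E then (0, 0)
  else cscale (fine (tvar mu (A n)))^-1 (autocorr mu (A n) f).

(* A complex Radon measure seen as a functional on C_c(G) (by complex
   linearity it is determined by its values on real-valued test functions):
   R-linear, and continuous for the inductive limit topology of C_c(G). *)
Definition radon_functional (g : (G -> R) -> R * R) : Prop :=
  (forall (a b : R) (f h : G -> R), Cc f -> Cc h ->
      g (fun x => a * f x + b * h x) =
      ((a * (g f).1 + b * (g h).1), (a * (g f).2 + b * (g h).2))) /\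
  (forall K : set G, compact K -> exists c : R, forall (f : G -> R) (M : R),
      Cc f -> (forall x, ~ K x -> f x = 0) -> (forall x, `|f x| <= M) ->
      cnorm (g f) <= c * M).

Definition vague_cluster (s : nat -> (G -> R) -> R * R)
  (g : (G -> R) -> R * R) : Prop :=
  radon_functional g /\
  forall (fs : seq (G -> R)) (eps : R) (N : nat),
    (forall f, f \in fs -> Cc f) -> 0 < eps ->
    exists2 n, (N <= n)%N & forall f, f \in fs -> cnorm (csub (s n f) (g f)) < eps.

Definition meas_eq_scaled (g1 : (G -> R) -> R * R) (c : R)
  (g2 : (G -> R) -> R * R) : Prop :=
  forall f, Cc f -> g1 f = cscale c (g2 f).

End Defs.

(* Main.v *)
Require Import Defs.
From HB Require Import structures.
From mathcomp Require Import all_boot all_order all_algebra.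
From mathcomp Require Import all_classical all_reals all_analysis.
From mathcomp Require Import ring lra.

Set Implicit Arguments.
Unset Strict Implicit.
Unset Printing Implicit Defensive.
Import Order.TTheory GRing.Theory Num.Theory.
Import numFieldNormedType.Exports.
Local Open Scope classical_set_scope.
Local Open Scope ring_scope.
Local Notation cscale := Defs.cscale.
Local Notation csub := Defs.csub.
Local Notation cnorm := Defs.cnorm.
Section CN.
Context {R : realType}.
Implicit Types (z w : R * R).

Definition cadd z w : R * R := (z.1 + w.1, z.2 + w.2).

Lemma cnorm_ge0 z : 0 <= cnorm z.
Proof. exact: sqrtr_ge0. Qed.

Lemma cnorm_scale (c : R) z : cnorm (cscale c z) = `|c| * cnorm z.
Proof.
rewrite /cnorm /cscale /= !exprMn -mulrDr sqrtrM ?sqrtr_sqr //.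
by rewrite sqr_ge0.
Qed.

Lemma cnorm_add z w : cnorm (cadd z w) <= cnorm z + cnorm w.
Proof.
rewrite /cnorm /cadd /=.
set a := z.1 ^+ 2 + z.2 ^+ 2; set b := w.1 ^+ 2 + w.2 ^+ 2.
have a0 : 0 <= a by rewrite /a addr_ge0 // sqr_ge0.
have b0 : 0 <= b by rewrite /b addr_ge0 // sqr_ge0.
have pa := sqr_sqrtr a0; have pb := sqr_sqrtr b0.
have p0 := sqrtr_ge0 a; have q0 := sqrtr_ge0 b.
set p := Num.sqrt a in pa p0 *; set q := Num.sqrt b in pb q0 *.
rewrite -(@ger0_norm _ (p + q)) ?addr_ge0 // -sqrtr_sqr ler_sqrt ?sqr_ge0 //.
have pq0 : 0 <= p * q by rewrite mulr_ge0.
have cs : (z.1 * w.1 + z.2 * w.2) ^+ 2 <= (p * q) ^+ 2.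
  rewrite exprMn pa pb /a /b.
  have := sqr_ge0 (z.1 * w.2 - z.2 * w.1); nra.
have : z.1 * w.1 + z.2 * w.2 <= p * q.
  have := ler_norm (z.1 * w.1 + z.2 * w.2).
  rewrite -[_ ^+ 2 <= _]ler_sqrt ?sqr_ge0 // !sqrtr_sqr (ger0_norm pq0) in cs.
  lra.
rewrite /a /b in pa pb; nra.
Qed.

Lemma cnorm_le z : cnorm z <= `|z.1| + `|z.2|.
Proof.
rewrite /cnorm -(@ger0_norm _ (`|z.1| + `|z.2|)) ?addr_ge0 // -sqrtr_sqr.
rewrite ler_sqrt ?sqr_ge0 // sqrrD !real_normK ?num_real //.
rewrite -addrA lerD2l lerDr; by rewrite mulrn_wge0 // mulr_ge0.
Qed.

End CN.
Section Topo.
Context {G : topologicalZmodType}.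

Lemma cont_addr (t : G) : continuous (fun x : G => x + t).
Proof.
move=> x; apply: (@continuous_comp _ _ _ (fun y => (y, t)) (fun p : G * G => p.1 + p.2)).
  by apply: cvg_pair; [exact: cvg_id|exact: cvg_cst].
exact: add_continuous.
Qed.

Lemma cont_addl (t : G) : continuous (fun x : G => t + x).
Proof.
move=> x; apply: (@continuous_comp _ _ _ (fun y => (t, y)) (fun p : G * G => p.1 + p.2)).
  by apply: cvg_pair; [exact: cvg_cst|exact: cvg_id].
exact: add_continuous.
Qed.

Lemma translate_open (t : G) (U : set G) : open U -> open (translate t U).
Proof.
move=> oU.
have -> : translate t U = (fun x => x + - t) @^-1` U.
  apply/seteqP; split => x /=.
    by move=> [a Ua <-]; rewrite addrC addKr.
  by move=> Ux; exists (x - t) => //; rewrite addrC subrK.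
by apply: open_comp => // x _; exact: cont_addr.
Qed.

Lemma translate_compact (t : G) (K : set G) : compact K -> compact (translate t K).
Proof.
move=> cK; apply: continuous_compact => //.
apply: continuous_subspaceT; exact: cont_addl.
Qed.

Lemma setadd_compact (A C : set G) : compact A -> compact C -> compact (setadd A C).
Proof.
move=> cA cC.
have -> : setadd A C = (fun p : G * G => p.1 + p.2) @` (A `*` C).
  apply/seteqP; split => x /=.
    by move=> [a Aa [c Cc <-]]; exists (a, c).
  by move=> [[a c] [/= Aa Cc] <-]; exists a => //; exists c.
apply: continuous_compact; last exact: compact_setX.
apply: continuous_subspaceT; exact: add_continuous.
Qed.

Lemma setsub_closed (F C : set G) : closed F -> compact C -> closed (setsub F C).
Proof.
move=> cF cC; rewrite -openC openE => x nx.
have nc : \forall i \near x, C `<=` (fun c => ~ F (i + c)).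
  apply: (proj1 (compact_near_coveringP C) cC) => c Cc.
  have oF : open (~` F) by rewrite openC.
  have nF : (~` F) (c + x).
    move=> Fcx; apply: nx; exists (c + x) => //; exists c => //.
    by rewrite addrC addKr.
  have := add_continuous (c, x); rewrite /continuous_at /=.
  move=> /(_ _ (open_nbhs_nbhs (conj oF nF))).
  move=> h; apply: (@filterS _ _ _ (fun p : G * G => (~` F) (p.1 + p.2))); last exact: h.
  by move=> [c' i] /=; rewrite addrC.
apply: filterS nc => i VP [f Ff [c Cc fc]].
by apply: (VP c Cc); rewrite -fc subrK.
Qed.

End Topo.

Section Meas.
Context {R : realType} {G : topologicalZmodType}.
Local Notation BG := (borel G).
Implicit Types (mu : @cmeasure R G) (m : {measure set BG -> \bar R}).

Lemma open_bmeas (U : set G) : open U -> bmeasurable U.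
Proof. by move=> oU; apply: sub_sigma_algebra. Qed.

Lemma closed_bmeas (F : set G) : closed F -> bmeasurable F.
Proof.
move=> cF; rewrite -(setCK F); apply: (@measurableC _ BG).
by apply: open_bmeas; rewrite openC.
Qed.

Lemma compact_bmeas (K : set G) : hausdorff_space G -> compact K -> bmeasurable K.
Proof. by move=> hG cK; apply: closed_bmeas; exact: compact_closed. Qed.

Lemma mev_le m (A B : set G) : bmeasurable A -> bmeasurable B -> A `<=` B ->
  (mev m A <= mev m B)%E.
Proof. by move=> mA mB AB; apply: le_measure => //; rewrite inE. Qed.

Lemma mev_ge0 m (A : set G) : (0 <= mev m A)%E.
Proof. exact: measure_ge0. Qed.

Lemma fine_split m (B S : set G) : bmeasurable B -> bmeasurable S ->
  (mev m B < +oo)%E ->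
  fine (mev m B) = fine (mev m (B `&` S)) + fine (mev m (B `\` S)).
Proof.
move=> mB mS fB.
have mBS : bmeasurable (B `&` S) by apply: (@measurableI _ BG).
have mBnS : bmeasurable (B `\` S) by apply: (@measurableD _ BG).
have eB : B = (B `&` S) `|` (B `\` S).
  apply/seteqP; split => x; last by case=> -[].
  by move=> Bx; case: (pselect (S x)) => Sx; [left|right].
have d : (B `&` S) `&` (B `\` S) = set0.
  by apply/seteqP; split => // x [[_ Sx] [_ nSx]].
have f1 : mev m (B `&` S) \is a fin_num.
  rewrite ge0_fin_numE ?mev_ge0 //; apply: le_lt_trans fB.
  by apply: mev_le => // x [].
have f2 : mev m (B `\` S) \is a fin_num.
  rewrite ge0_fin_numE ?mev_ge0 //; apply: le_lt_trans fB.
  by apply: mev_le => // x [].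
rewrite {1}eB /mev (measureU m mBS mBnS d) fineD //.
Qed.

Definition fin4 mu (X : set G) := forall B, bmeasurable B -> B `<=` X ->
  [/\ (mev (cm_rp mu) B < +oo)%E, (mev (cm_rn mu) B < +oo)%E,
      (mev (cm_ip mu) B < +oo)%E & (mev (cm_in mu) B < +oo)%E].

Lemma fin4_sub mu X Y : fin4 mu Y -> X `<=` Y -> fin4 mu X.
Proof. by move=> h XY B mB BX; apply: h => //; exact: subset_trans XY. Qed.

Lemma cval_split mu X (B S : set G) : fin4 mu X -> bmeasurable B -> B `<=` X ->
  bmeasurable S ->
  cval mu B = cadd (cval mu (B `&` S)) (cval mu (B `\` S)).
Proof.
move=> h mB BX mS; have [f1 f2 f3 f4] := h B mB BX.
rewrite /cval /cadd /= (fine_split mB mS f1) (fine_split mB mS f2).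
rewrite (fine_split mB mS f3) (fine_split mB mS f4).
congr (_, _); ring.
Qed.

Lemma tvar_ge0 mu X : (0 <= tvar mu X)%E.
Proof.
apply: ereal_sup_ubound; exists 0%N, (fun _ => set0); split => //.
- by move=> i; apply: (@measurable0 _ BG).
- by move=> i; apply: sub0set.
- by move=> i j _; rewrite setI0.
- by rewrite big_ord0.
Qed.

Lemma tvar_le mu X Y : X `<=` Y -> (tvar mu X <= tvar mu Y)%E.
Proof.
move=> XY; apply: ereal_sup_le => x [n [B [h1 h2 h3 h4]]].
by exists n, B; split => // i; exact: subset_trans (h2 i) XY.
Qed.

Lemma tvar_set0 mu X : X `<=` set0 -> (tvar mu X <= 0)%E.
Proof.
move=> X0; apply: ge_ereal_sup => _ [n [B [_ BX _ ->]]].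
rewrite lee_fin big1 // => i _.
have -> : B i = set0 by apply/seteqP; split => // x /BX /X0.
rewrite /cval /mev !measure0 /= subrr /cnorm /=.
by rewrite expr0n /= addr0 sqrtr0.
Qed.

Lemma tvar_subadd mu X (S T : set G) : fin4 mu X -> bmeasurable S ->
  X `<=` S `|` T -> (tvar mu X <= tvar mu S + tvar mu T)%E.
Proof.
move=> h mS XST; apply: ge_ereal_sup => _ [n [B [Bm BX Bd ->]]].
apply: (@le_trans _ _ ((\sum_(i < n) cnorm (cval mu (B i `&` S)))%:E +
   (\sum_(i < n) cnorm (cval mu (B i `\` S)))%:E)).
  rewrite -EFinD lee_fin -big_split /=; apply: ler_sum => i _.
  rewrite (cval_split h (Bm i) (BX i) mS); exact: cnorm_add.
apply: leeD; apply: ereal_sup_ubound.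
- exists n, (fun i => B i `&` S); split.
  + by move=> i; apply: (@measurableI _ BG); [exact: Bm|exact: mS].
  + by move=> i; apply: subIsetr.
  + move=> i j ij; have := Bd i j ij; rewrite -!subset0 => h0 x [[bi _] [bj _]].
    exact: h0 x (conj bi bj).
  + by [].
- exists n, (fun i => B i `\` S); split.
  + by move=> i; apply: (@measurableD _ BG); [exact: Bm|exact: mS].
  + by move=> i x [/BX /XST [] // Sx /(_ Sx)].
  + move=> i j ij; have := Bd i j ij; rewrite -!subset0 => h0 x [[bi _] [bj _]].
    exact: h0 x (conj bi bj).
  + by [].
Qed.

Fixpoint unionl (f : G -> set G) (ts : seq G) : set G :=
  if ts is t :: ts' then f t `|` unionl f ts' else set0.

Lemma tvar_cover mu (K : set G) (M : R) (ts : seq G) (X : set G) :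
  hausdorff_space G -> compact K ->
  (forall t, (tvar mu (translate t K) <= M%:E)%E) -> fin4 mu X ->
  X `<=` unionl (fun t => translate t K) ts ->
  (tvar mu X <= ((size ts)%:R * M)%:E)%E.
Proof.
move=> hG cK hM; elim: ts X => [|t ts IH] X hX XU /=.
  by rewrite mul0r; apply: tvar_set0.
have mt : bmeasurable (translate t K).
  by apply: compact_bmeas => //; exact: translate_compact.
apply: le_trans (tvar_subadd (T := X `\` translate t K) hX mt _) _.
  by move=> x Xx; case: (pselect (translate t K x)) => h; [left|right].
apply: le_trans (leeD (hM t) (IH _ (fin4_sub hX (@subDsetl _ _ _)) _)) _.
  by move=> x [/XU [] // ? /(_ _)].
by rewrite -EFinD lee_fin -addn1 natrD mulrDl mul1r addrC.
Qed.

End Meas.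

Section Pack.
Context {R : realType} {G : topologicalZmodType}.
Local Notation BG := (borel G).
Variables (vol : {measure set BG -> \bar R}) (A W : set G).
Hypotheses (hv : haar_measure vol) (oW : open W).

Fixpoint sep (ts : seq G) : Prop :=
  if ts is t :: ts' then
    [/\ A t, translate t W `&` unionl (fun u => translate u W) ts' = set0 & sep ts']
  else True.

Lemma unionl_open (f : G -> set G) ts : (forall t, open (f t)) -> open (unionl f ts).
Proof. by move=> h; elim: ts => [|t ts IH] /=; [exact: open0|exact: openU]. Qed.

Let UW ts := unionl (fun u => translate u W) ts.

Lemma UW_meas ts : bmeasurable (UW ts).
Proof. by apply: open_bmeas; apply: unionl_open => t; exact: translate_open. Qed.

Lemma sep_vol ts : mev vol W \is a fin_num -> sep ts ->
  mev vol (UW ts) = ((size ts)%:R * fine (mev vol W))%:E.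
Proof.
move=> fW; elim: ts => [|t ts IH] /=.
  by rewrite mul0r /mev measure0.
move=> [At d st].
have mt : bmeasurable (translate t W) by apply: open_bmeas; exact: translate_open.
rewrite /mev (measureU vol mt (UW_meas ts) d).
have [hinv _ _] := hv.
have e1 := hinv t W (open_bmeas oW); rewrite /mev in e1 IH fW.
transitivity (vol W + ((size ts)%:R * fine (vol W))%:E).
  by congr (_ + _); [exact: e1|exact: IH].
rewrite -{1}(fineK fW) -EFinD.
by rewrite -addn1 natrD mulrDl mul1r addrC.
Qed.

Lemma setadd_open : open (setadd A W).
Proof.
have -> : setadd A W = \bigcup_(a in A) translate a W.
  apply/seteqP; split => x.
    by move=> [a Aa [w Ww <-]]; exists a => //; exists w.
  by move=> [a Aa [w Ww <-]]; exists a => //; exists w.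
by apply: bigcup_open => a _; exact: translate_open.
Qed.

Lemma UW_sub ts : sep ts -> UW ts `<=` setadd A W.
Proof.
elim: ts => [|t ts IH] /=; first by move=> _ x.
move=> [At _ st] x [[w Ww <-]|].
  by exists t => //; exists w.
exact: IH.
Qed.

Lemma sep_size ts : mev vol W \is a fin_num -> (mev vol (setadd A W) < +oo)%E ->
  sep ts -> (size ts)%:R * fine (mev vol W) <= fine (mev vol (setadd A W)).
Proof.
move=> fW fAW st.
have := mev_le vol (UW_meas ts) (open_bmeas setadd_open) (UW_sub st).
rewrite sep_vol // => h.
rewrite -lee_fin fineK //; by rewrite ge0_fin_numE ?mev_ge0.
Qed.

Lemma exists_maximal : W 0 -> mev vol W \is a fin_num ->
  (mev vol (setadd A W) < +oo)%E ->
  exists ts, sep ts /\ forall a, A a -> translate a W `&` UW ts !=set0.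
Proof.
move=> W0 fW fAW.
case: (pselect (exists ts, sep ts /\ forall a, A a -> translate a W `&` UW ts !=set0)) => // H.
exfalso.
have ex k : exists ts, sep ts /\ size ts = k.
  elim: k => [|k [ts [st e]]]; first by exists [::].
  have : ~ (forall a, A a -> translate a W `&` UW ts !=set0).
    by move=> h; apply: H; exists ts.
  move=> /existsNP [a /not_implyP [Aa nh]].
  exists (a :: ts); split => /=; last by rewrite e.
  split => //; apply/seteqP; split => // x hx; apply: nh; by exists x.
have [_ _ hpos] := hv.
have vW0 : 0 < fine (mev vol W).
  have := hpos W oW (ex_intro _ 0 W0).
  by rewrite -(fineK fW) lte_fin.
pose k := (Num.truncn (fine (mev vol (setadd A W)) / fine (mev vol W))).+1.
have [ts [st e]] := ex k.
have := sep_size fW fAW st; rewrite e.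
have := truncnS_gt (fine (mev vol (setadd A W)) / fine (mev vol W)).
rewrite -/k ltr_pdivrMr // => h1 h2.
by have := lt_le_trans h1 h2; rewrite ltxx.
Qed.

Lemma unionl_shift (f g : G -> set G) (z a : G) ts :
  (forall u, f u z -> g u a) -> unionl f ts z -> unionl g ts a.
Proof.
move=> h; elim: ts => [|t ts IH] //= [/h|/IH]; [left|right] => //.
Qed.

Lemma maximal_cover (C : set G) ts :
  (forall w1 w2, W w1 -> W w2 -> C (w2 - w1)) ->
  (forall a, A a -> translate a W `&` UW ts !=set0) ->
  A `<=` unionl (fun u => translate u C) ts.
Proof.
move=> hC hm a Aa; have [z [[w1 Ww1 e1] hz]] := hm a Aa.
apply: (unionl_shift _ hz) => u [w2 Ww2 e2].
exists (w2 - w1); first exact: hC.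
by rewrite addrA e2 -e1 addrK.
Qed.

End Pack.

Section Upper.
Context {R : realType} {G : topologicalZmodType}.
Local Notation BG := (borel G).

Lemma exists_CW : locally_compact [set: G] ->
  exists C W : set G, [/\ compact C, open W, W 0 &
    forall w1 w2, W w1 -> W w2 -> C (w2 - w1)].
Proof.
move=> lc; have [C nC [cC _]] := lc 0 I.
rewrite withinET in nC.
have := @sub_continuous G (0, 0); rewrite /continuous_at /= subr0.
move=> /(_ _ nC) [[U1 V1] /= [nU1 nV1] UV].
have : nbhs (0 : G) (U1 `&` V1) by apply: filterI.
rewrite nbhsE => -[W [oW W0] WUV].
exists C, W; split => // w1 w2 /WUV [_ V1w1] /WUV [U1w2 _].
exact: (UV (w2, w1)).
Qed.

Lemma vH_meas (A C : set G) : hausdorff_space G -> compact A -> compact C ->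
  bmeasurable (vH_boundary C A).
Proof.
move=> hG cA cC; apply: (@measurableU _ BG).
  apply: (@measurableD _ BG).
    by apply: compact_bmeas => //; exact: setadd_compact.
  by apply: open_bmeas; exact: open_interior.
apply: (@measurableI _ BG).
  by apply: closed_bmeas; apply: setsub_closed => //; exact: closed_closure.
exact: compact_bmeas.
Qed.

Lemma vH_sub (A C : set G) : C 0 -> vH_boundary C A `<=` setadd A C.
Proof.
move=> C0 x [[]//|[_ Ax]].
by exists x => //; exists 0 => //; rewrite addr0.
Qed.

Lemma AW_sub (A C W : set G) : W `<=` C -> setadd A W `<=` A `|` vH_boundary C A.
Proof.
move=> WC _ [a Aa [w Ww <-]].
case: (pselect (A (a + w))) => h; [by left|right; left].
split; first by exists a => //; exists w => //; exact: WC.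
by move=> /interior_subset.
Qed.

Lemma bound_one (vol : {measure set BG -> \bar R}) (mu : @cmeasure R G)
  (C W An : set G) (M : R) :
  hausdorff_space G -> haar_measure vol -> cm_locally_finite mu ->
  compact C -> open W -> W 0 -> (forall w1 w2, W w1 -> W w2 -> C (w2 - w1)) ->
  (forall t, (tvar mu (translate t C) <= M%:E)%E) -> 0 <= M ->
  compact An ->
  tvar mu An \is a fin_num /\
  fine (tvar mu An) * fine (mev vol W) <=
    M * (fine (mev vol An) + fine (mev vol (vH_boundary C An))).
Proof.
move=> hG hv lf cC oW W0 hC hM M0 cA.
have [_ hfin _] := hv.
have WC : W `<=` C by move=> w Ww; rewrite -[w]subr0; exact: hC.
have C0 : C 0 by rewrite -[0](subr0 (0 : G)); exact: hC.
have mA := compact_bmeas hG cA.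
have cAC := setadd_compact cA cC.
have mAC := compact_bmeas hG cAC.
have mD := vH_meas hG cA cC.
have mAW : bmeasurable (setadd An W) := open_bmeas (setadd_open An oW).
have fA : (mev vol An < +oo)%E := hfin _ cA.
have fD : (mev vol (vH_boundary C An) < +oo)%E.
  exact: le_lt_trans (mev_le vol mD mAC (vH_sub (A:=An) C0)) (hfin _ cAC).
have fW : mev vol W \is a fin_num.
  rewrite ge0_fin_numE ?mev_ge0 //.
  exact: le_lt_trans (mev_le vol (open_bmeas oW) (compact_bmeas hG cC) WC) (hfin _ cC).
have hAW : (mev vol (setadd An W) <= mev vol An + mev vol (vH_boundary C An))%E.
  apply: le_trans (mev_le vol mAW (@measurableU _ BG _ _ mA mD) (AW_sub (A:=An) WC)) _.
  exact: (measureU2 vol mA mD).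
have fA' : mev vol An \is a fin_num by rewrite ge0_fin_numE ?mev_ge0.
have fD' : mev vol (vH_boundary C An) \is a fin_num by rewrite ge0_fin_numE ?mev_ge0.
have fAW : (mev vol (setadd An W) < +oo)%E.
  by apply: le_lt_trans hAW _; rewrite -(fineK fA') -(fineK fD') -EFinD ltry.
have [ts [st hm]] := exists_maximal hv oW W0 fW fAW.
have cov := maximal_cover hC hm.
have f4 : fin4 mu An.
  move=> B mB BA; case: lf => h1 h2 h3 h4.
  by split; apply: le_lt_trans (mev_le _ mB mA BA) _; [exact: h1|exact: h2|exact: h3|exact: h4].
have ht := tvar_cover hG cC hM f4 cov.
have tf : tvar mu An \is a fin_num.
  by rewrite ge0_fin_numE ?tvar_ge0 //; apply: le_lt_trans ht (ltry _).
split => //.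
have hs := sep_size hv oW fW fAW st.
rewrite -(fineK tf) lee_fin in ht.
have hAW' : fine (mev vol (setadd An W)) <= fine (mev vol An) + fine (mev vol (vH_boundary C An)).
  have fAW' : mev vol (setadd An W) \is a fin_num by rewrite ge0_fin_numE ?mev_ge0.
  by rewrite -lee_fin EFinD !fineK.
have vW0 : 0 <= fine (mev vol W) by apply: fine_ge0; exact: mev_ge0.
have t0 : 0 <= fine (tvar mu An) by apply: fine_ge0; exact: tvar_ge0.
have s0 : 0 <= (size ts)%:R :> R by [].
set t := fine (tvar mu An) in ht t0 *.
set w := fine (mev vol W) in hs vW0 *.
set aw := fine (mev vol (setadd An W)) in hs hAW' *.
set a := fine (mev vol An) in hAW' *.
set d := fine (mev vol (vH_boundary C An)) in hAW' *.
set sz := (size ts)%:R in hs ht s0 *.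
nra.
Qed.

End Upper.

Section ClusterScale.
Context {R : realType} {G : topologicalZmodType}.

Lemma radon_scale (g : (G -> R) -> R * R) (C : R) :
  radon_functional g -> radon_functional (fun f => cscale C (g f)).
Proof.
move=> [lin bd]; split.
  move=> a b f h cf ch; rewrite lin //= /cscale /=; congr (_, _); ring.
move=> K cK; have [c hc] := bd K cK; exists (`|C| * c) => f M cf fK fM.
rewrite cnorm_scale -mulrA ler_wpM2l //; exact: hc.
Qed.

Lemma cluster_scale (s t : nat -> (G -> R) -> R * R) (r : nat -> R) (a b : R)
  (N0 : nat) (gc : (G -> R) -> R * R) :
  0 < a -> (forall n, (N0 <= n)%N -> a <= r n <= b) ->
  (forall n f, (N0 <= n)%N -> t n f = cscale (r n) (s n f)) ->
  vague_cluster s gc ->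
  exists2 C, a <= C <= b & vague_cluster t (fun f => cscale C (gc f)).
Proof.
move=> a0 rab ts [rad cl].
pose D := [set i : seq (G -> R) * R * nat |
  0 < i.1.2 /\ (forall f, f \in i.1.1 -> Cc f) /\ (N0 <= i.2)%N].
pose I (i : seq (G -> R) * R * nat) := [set n | (i.2 <= n)%N /\
   forall f, f \in i.1.1 -> cnorm (csub (s n f) (gc f)) < i.1.2].
pose B i := r @` I i.
have FF : Filter (filter_from D B).
  apply: filter_from_filter.
    by exists ([::], 1, N0); rewrite /D /=; split => //; split.
  move=> [[fs1 e1] N1] [[fs2 e2] N2] [/= e10 [c1 n1]] [/= e20 [c2 n2]].
  exists (fs1 ++ fs2, Num.min e1 e2, maxn N1 N2).
    split => /=; first by rewrite lt_min e10.
    split; last by rewrite leq_max n1.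
    by move=> f; rewrite mem_cat => /orP[/c1|/c2].
  move=> _ [n [/= Nn hn] <-]; split; exists n => //; split => /=.
  - by apply: leq_trans Nn; rewrite leq_maxl.
  - move=> f f1; apply: (lt_le_trans (hn f _)); first by rewrite mem_cat f1.
    by rewrite ge_min lexx.
  - by apply: leq_trans Nn; rewrite leq_maxr.
  - move=> f f2; apply: (lt_le_trans (hn f _)); first by rewrite mem_cat f2 orbT.
    by rewrite ge_min lexx orbT.
have PF : ProperFilter (filter_from D B).
  apply: filter_from_proper => // -[[fs e] N] [/= e0 [cf nN]].
  have [n Nn hn] := cl fs e N cf e0.
  by exists (r n); exists n.
have Fab : filter_from D B `[a, b]%classic.
  exists ([::], 1, N0); first by split => //; split.
  move=> _ [n [/= Nn _] <-]; rewrite /= in_itv /=; exact: rab.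
have [C [CabI clC]] := segment_compact PF Fab.
have Cab : a <= C <= b by move: CabI; rewrite /= in_itv.
exists C => //; split; first exact: radon_scale.
move=> fs eps N cf e0.
pose Bd := 1 + \sum_(f <- fs) cnorm (gc f).
have Bd0 : 0 < Bd.
  rewrite /Bd; apply: (@lt_le_trans _ _ 1) => //; rewrite lerDl sumr_ge0 // => f _; exact: cnorm_ge0.
have Bdf f : f \in fs -> cnorm (gc f) <= Bd.
  move=> ffs; rewrite /Bd (big_rem f) //= addrCA lerDl.
  rewrite addr_ge0 // ?sumr_ge0 // => h _; exact: cnorm_ge0.

have b0 : 0 < b by case/andP: Cab => h1 h2; apply: lt_le_trans a0 _; apply: le_trans h1 h2.
pose e1 := eps / (2 * (b + 1)).
have e10 : 0 < e1 by rewrite divr_gt0 // mulr_gt0 // addr_gt0.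
pose dl := eps / (2 * Bd).
have dl0 : 0 < dl by rewrite divr_gt0 // mulr_gt0.
have Fi : filter_from D B (B (fs, e1, maxn N N0)).
  exists (fs, e1, maxn N N0) => //; split => //; split => //=.
  by rewrite leq_maxr.
have := clC _ _ Fi (nbhsx_ballx C dl dl0).
move=> [_ [[n [/= Nn hn] <-] bl]].
have N0n : (N0 <= n)%N by apply: leq_trans Nn; rewrite leq_maxr.
exists n; first by apply: leq_trans Nn; rewrite leq_maxl.
move=> f ffs; rewrite ts //.
have /andP[ar rb] := rab n N0n.
have -> : csub (cscale (r n) (s n f)) (cscale C (gc f)) =
   cadd (cscale (r n) (csub (s n f) (gc f))) (cscale (r n - C) (gc f)).
  by rewrite /csub /cscale /cadd /=; congr (_, _); ring.
apply: (le_lt_trans (cnorm_add _ _)); rewrite !cnorm_scale.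
have h1 : `|r n| * cnorm (csub (s n f) (gc f)) < eps / 2.
  rewrite ger0_norm; last by apply: le_trans ar; exact: ltW.
  apply: (@le_lt_trans _ _ (b * e1)).
    apply: ler_pM => //; first by apply: le_trans ar; exact: ltW.
      exact: cnorm_ge0.
    exact: ltW (hn f ffs).
  rewrite /e1 mulrA ltr_pdivrMr ?mulr_gt0 ?addr_gt0 //.
  have -> : eps / 2 * (2 * (b + 1)) = eps * (b + 1) by field.
  nra.
have h2 : `|r n - C| * cnorm (gc f) <= eps / 2.
  have : `|C - r n| < dl by move: bl; rewrite /ball /=.
  rewrite distrC => hd.
  apply: (@le_trans _ _ (dl * Bd)).
    apply: ler_pM => //; [exact: cnorm_ge0| exact: ltW | exact: Bdf].
  rewrite /dl le_eqVlt; apply/orP; left; apply/eqP; field; exact: lt0r_neq0.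
lra.
Qed.

End ClusterScale.

Lemma liminf_pos {R : realType} (u : nat -> R) :
  (0 < limn_einf (fun n => (u n)%:E))%E ->
  exists2 a, 0 < a & exists N, forall n, (N <= n)%N -> a <= u n.
Proof.
rewrite limn_einf_lim (cvg_lim _ (@cvg_einfs_sup _ _)) //.
move=> /ereal_sup_gt [_ [N _ <-]].
have lb n : (N <= n)%N -> (einfs (fun n => (u n)%:E) N <= (u n)%:E)%E.
  by move=> Nn; apply: ereal_inf_lbound; exists n.
case E : (einfs (fun n => (u n)%:E) N) => [x| |] // x0.
- exists x; first by rewrite -lte_fin.
  by exists N => n Nn; have := lb n Nn; rewrite E lee_fin.
- by have := lb N (leqnn N); rewrite E.
Qed.


Theorem theorem3p9 (R : realType) (G : topologicalZmodType)
  (vol : {measure set (borel G) -> \bar R}) (mu : @cmeasure R G) (A : nat -> set G) :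
  hausdorff_space G -> locally_compact [set: G] -> @second_countable G ->
  haar_measure vol ->
  cm_locally_finite mu -> translation_bounded mu ->
  van_Hove vol A ->
  (0 < limn_einf (fun n => (fine (tvar mu (A n)) / fine (mev vol (A n)))%:E))%E ->
  (forall gc, vague_cluster (gamma_count mu A) gc ->
     exists2 C : R, 0 < C &
       exists2 gd, vague_cluster (gamma_dens vol mu A) gd & meas_eq_scaled gd C gc) /\
  (forall gd, vague_cluster (gamma_dens vol mu A) gd ->
     exists2 D : R, 0 < D &
       exists2 gc, vague_cluster (gamma_count mu A) gc & meas_eq_scaled gc D gd).
Proof.
move=> hG lc _ hv lf tb vH hlim.
have [C [W [cC oW W0 hC]]] := exists_CW lc.
have [M hM] := tb C cC.
have M0 : 0 <= M.
  by have := le_trans (tvar_ge0 mu _) (hM 0); rewrite lee_fin.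
have [hcA [hpA hvh]] := vH.
have [_ hfin hpos] := hv.
have WC : W `<=` C by move=> w Ww; rewrite -[w]subr0; exact: hC.
have fW : mev vol W \is a fin_num.
  rewrite ge0_fin_numE ?mev_ge0 //.
  exact: le_lt_trans (mev_le vol (open_bmeas oW) (compact_bmeas hG cC) WC) (hfin _ cC).
have vW0 : 0 < fine (mev vol W).
  have := hpos W oW (ex_intro _ 0 W0).
  by rewrite -(fineK fW) lte_fin.
have vA0 n : 0 < fine (mev vol (A n)).
  have fA : mev vol (A n) \is a fin_num by rewrite ge0_fin_numE ?mev_ge0 ?hfin.
  by have := hpA n; rewrite -(fineK fA) lte_fin.
have [N1 _ hN1] := cvgr_le _ (hvh C cC) _ (ltr01 : (0:R) < 1).
have [a0 a00 [N2 hN2]] := liminf_pos hlim.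
pose r n := fine (tvar mu (A n)) / fine (mev vol (A n)).
pose b := 2 * M / fine (mev vol W).
pose N0 := maxn N1 N2.
have hr n : (N0 <= n)%N -> a0 <= r n <= b.
  move=> Nn; apply/andP; split.
    by apply: hN2; apply: leq_trans Nn; rewrite leq_maxr.
  have [_ hb] := bound_one hG hv lf cC oW W0 hC hM M0 (hcA n).
  have hd := hN1 n (leq_trans (leq_maxl _ _) Nn).
  have := vA0 n; move: hb hd; rewrite /r /b.
  set t := fine (tvar mu (A n)); set a := fine (mev vol (A n)).
  set d := fine (mev vol (vH_boundary C (A n))); set w := fine (mev vol W).
  move=> hb hd a0'.
  rewrite ler_pdivrMr // in hd; rewrite mul1r in hd.
  rewrite ler_pdivrMr // mulrAC ler_pdivlMr //.
  nra.
have tv0 n : (N0 <= n)%N -> fine (tvar mu (A n)) != 0.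
  move=> Nn; have /andP[h _] := hr n Nn; apply/eqP => e.
  by move: h; rewrite /r e mul0r => h; have := lt_le_trans a00 h; rewrite ltxx.
have gc_eq n f : (N0 <= n)%N -> gamma_count mu A n f =
    cscale (fine (tvar mu (A n)))^-1 (autocorr mu (A n) f).
  move=> Nn; rewrite /gamma_count; case: ifP => // /eqP e.
  by have := tv0 n Nn; rewrite e eqxx.
have b0 : 0 < b.
  have /andP[h1 h2] := hr N0 (leqnn _); exact: lt_le_trans a00 (le_trans h1 h2).
split.
- move=> gc hgc.
  have := @cluster_scale R G (gamma_count mu A) (gamma_dens vol mu A) r a0 b N0 gc a00 hr.
  case.
  + move=> n f Nn; rewrite gc_eq // /gamma_dens /cscale /r /=.
    have := tv0 n Nn; have := vA0 n.
    set t := fine (tvar mu (A n)); set a := fine (mev vol (A n)) => ha ht.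
    by congr (_, _); field; rewrite ht gt_eqF.
  + exact: hgc.
  move=> Cs /andP[h1 _] hcl; exists Cs; first exact: lt_le_trans a00 h1.
  by exists (fun f => cscale Cs (gc f)).
- move=> gd hgd.
  have := @cluster_scale R G (gamma_dens vol mu A) (gamma_count mu A)
     (fun n => (r n)^-1) b^-1 a0^-1 N0 gd.
  case.
  + by rewrite invr_gt0.
  + move=> n Nn; have /andP[h1 h2] := hr n Nn.
    have rp : 0 < r n by exact: lt_le_trans a00 h1.
    by rewrite !lef_pV2 ?posrE ?h1 ?h2.
  + move=> n f Nn; rewrite gc_eq // /gamma_dens /cscale /r /=.
    have := tv0 n Nn; have := vA0 n.
    set t := fine (tvar mu (A n)); set a := fine (mev vol (A n)) => ha ht.
    by congr (_, _); field; rewrite ht gt_eqF.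
  + exact: hgd.
  move=> Ds /andP[h1 _] hcl; exists Ds; first by apply: lt_le_trans h1; rewrite invr_gt0.
  by exists (fun f => cscale Ds (gd f)).
Qed.
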